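(* For $\pi,\varrho\in K$ let $A_{\pi,\varrho}$ be the two-dimensional algebra with basis $r,r^2$ and multiplication $r\cdot r=r^2$, $r\cdot r^2=\pi r^2$, $r^2\cdot r=\varrho r^2$, $r^2\cdot r^2=\pi\varrho r^2$. Then every $A_{\pi,\varrho}$ is isomorphic to exactly one of the five algebras $A_{0,0},A_{1,1},A_{0,1},A_{1,0},A_{1,-1}$, and these five are pairwise nonisomorphic. Precisely: $A_{0,\varrho}\cong A_{0,1}$ for $\varrho\ne0$, $A_{\pi,0}\cong A_{1,0}$ for $\pi\neq0$, $A_{\pi,\pi}\cong A_{1,1}$ for $\pi\ne0$, and $A_{\pi,\varrho}\cong A_{1,-1}$ for $\pi\ne\varrho$ both nonzero.
   Context: $K$ is a field of characteristic $0$; algebras are not necessarily associative. *)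

(* Defs.v *)
From HB Require Import structures.
From mathcomp Require Import all_boot all_order all_algebra.
Set Implicit Arguments. Unset Strict Implicit. Unset Printing Implicit Defensive.
Import GRing.Theory.
Local Open Scope ring_scope.

(* Elements of A_{pi,rho} are row vectors x = x_0 r + x_1 r^2 in K^2,
   coordinates in the basis (r, r^2). *)
Definition alg_mul (K : fieldType) (pi rho : K) (x y : 'rV[K]_2) : 'rV[K]_2 :=
  let a := x ord0 0 in let b := x ord0 1 in
  let c := y ord0 0 in let d := y ord0 1 in
  (* a c (r r) + a d (r r^2) + b c (r^2 r) + b d (r^2 r^2) *)
  \row_(j < 2) (if j == 0 :> nat then 0
                else a * c + pi * (a * d) + rho * (b * c) + pi * rho * (b * d)).

Definition alg_iso (K : fieldType) (pi rho pi' rho' : K) : Prop :=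
  exists f : 'rV[K]_2 -> 'rV[K]_2,
    [/\ (forall (a : K) (x y : 'rV[K]_2), f (a *: x + y) = a *: f x + f y),
        bijective f &
        forall x y, f (alg_mul pi rho x y) = alg_mul pi' rho' (f x) (f y)].

Definition canon_pi (K : fieldType) (i : 'I_5) : K :=
  match val i with 0 => 0 | 1 => 1 | 2 => 0 | 3 => 1 | _ => 1 end.
Definition canon_rho (K : fieldType) (i : 'I_5) : K :=
  match val i with 0 => 0 | 1 => 1 | 2 => 1 | 3 => 0 | _ => -1 end.

(* Main.v *)
Set Warnings "-notation-overridden,-ambiguous-paths".
Require Import Defs.
From mathcomp Require Import all_boot all_order all_algebra.
From mathcomp Require Import ring.
Import GRing.Theory.
Local Open Scope ring_scope.
Set Implicit Arguments. Unset Strict Implicit.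

Lemma ord2P (j : 'I_2) : j = 0 \/ j = 1.
Proof. case: j => [[|[|//]] H]; [left|right]; exact: val_inj. Qed.

Lemma rv2E (K : fieldType) (x y : 'rV[K]_2) :
  x ord0 0 = y ord0 0 -> x ord0 1 = y ord0 1 -> x = y.
Proof. move=> h0 h1; apply/rowP => j; by case: (ord2P j) => ->. Qed.

Definition mkv (K : fieldType) (a b : K) : 'rV[K]_2 :=
  \row_(j < 2) (if j == 0 :> nat then a else b).

Lemma mkv0 (K : fieldType) (a b : K) : mkv a b ord0 0 = a.
Proof. by rewrite mxE. Qed.
Lemma mkv1 (K : fieldType) (a b : K) : mkv a b ord0 1 = b.
Proof. by rewrite mxE. Qed.

Lemma iso_inv (K : fieldType) (pi rho pi' rho' : K) :
  alg_iso pi rho pi' rho' ->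
  [/\ (pi == 0) = (pi' == 0), (rho == 0) = (rho' == 0) & (pi == rho) = (pi' == rho')].
Proof.
move=> [f [lin [g fg gf] mul]].
have f0 : f 0 = 0.
  have := lin 1 0 0; rewrite scale1r !addr0 => /(congr1 (fun w => w - f 0)).
  by rewrite subrr addrK scale1r => h; exact: esym h.
have fZ a x : f (a *: x) = a *: f x by rewrite -[a *: x]addr0 lin f0 addr0.
set r := mkv 1 (0 : K); set e := mkv 0 (1 : K).
set p := f r ord0 0; set q := f r ord0 1; set u := f e ord0 0; set v := f e ord0 1.
have m1 : alg_mul pi rho r r = e by apply: rv2E; rewrite !mxE /=; ring.
have m2 : alg_mul pi rho r e = pi *: e by apply: rv2E; rewrite !mxE /=; ring.
have m3 : alg_mul pi rho e r = rho *: e by apply: rv2E; rewrite !mxE /=; ring.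
have h1 := mul r r; rewrite m1 -/e in h1.
have hu : u = 0 by rewrite /u h1 mxE.
have hv : v = (p + rho' * q) * (p + pi' * q).
  by rewrite /v h1 mxE /= -/p -/q; ring.
have h2 := mul r e; rewrite m2 fZ in h2.
have e2 : pi * v = (p + rho' * q) * pi' * v.
  have := congr1 (fun w : 'rV[K]_2 => w ord0 1) h2; rewrite !mxE /= -/p -/q -/u -/v hu => ->; ring.
have h3 := mul e r; rewrite m3 fZ in h3.
have e3 : rho * v = rho' * (p + pi' * q) * v.
  have := congr1 (fun w : 'rV[K]_2 => w ord0 1) h3; rewrite !mxE /= -/p -/q -/u -/v hu => ->; ring.
have v0 : v != 0.
  apply/eqP => v0.
  have fe0 : f e = 0 by apply: rv2E; rewrite mxE -/u -/v ?hu ?v0.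
  have : g (f e) = g (f 0) by rewrite fe0 f0.
  rewrite !fg => /(congr1 (fun w : 'rV[K]_2 => w ord0 1)); rewrite !mxE /=.
  by move/eqP; rewrite oner_eq0.
have p0 : p != 0.
  apply/eqP => p0.
  have fz : f (v *: r + (- q) *: e) = 0.
    rewrite lin fZ; apply: rv2E; rewrite !mxE /=.
    + by rewrite /u /p in hu p0 *; rewrite hu p0; ring.
    + by rewrite /q /v; ring.
  have : g (f (v *: r + (- q) *: e)) = g (f 0) by rewrite fz f0.
  rewrite !fg => /(congr1 (fun w : 'rV[K]_2 => w ord0 0)); rewrite !mxE /=.
  move=> h; move/eqP: v0; apply; apply: etrans h; ring.
have Hpi : pi = (p + rho' * q) * pi' by apply: (mulIf v0).
have Hrho : rho = rho' * (p + pi' * q) by apply: (mulIf v0).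
move: v0; rewrite hv mulf_eq0 negb_or => /andP [A0 B0].
split.
- by rewrite Hpi mulf_eq0 (negbTE A0).
- by rewrite Hrho mulf_eq0 (negbTE B0) orbF.
- rewrite -subr_eq0 (_ : pi - rho = p * (pi' - rho')); last by rewrite Hpi Hrho; ring.
  by rewrite mulf_eq0 (negbTE p0) subr_eq0.
Qed.
Lemma mk_iso (K : fieldType) (pi rho pi' rho' p u : K) :
  p != 0 -> p + rho' * u != 0 -> p + pi' * u != 0 ->
  pi = (p + rho' * u) * pi' -> rho = rho' * (p + pi' * u) ->
  alg_iso pi rho pi' rho'.
Proof.
move=> p0 A0 B0 -> ->.
set v := (p + rho' * u) * (p + pi' * u).
have v0 : v != 0 by rewrite mulf_neq0.
pose f (x : 'rV[K]_2) : 'rV[K]_2 :=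
  \row_(j < 2) (if j == 0 :> nat then p * x ord0 0 else u * x ord0 0 + v * x ord0 1).
pose g (x : 'rV[K]_2) : 'rV[K]_2 :=
  \row_(j < 2) (if j == 0 :> nat then x ord0 0 / p else (x ord0 1 - u * (x ord0 0 / p)) / v).
exists f; split.
- move=> a x y; apply: rv2E; rewrite !mxE /=; ring.
- exists g => x; apply: rv2E; rewrite !mxE /=; field; by rewrite ?v0 ?p0.
- move=> x y; apply: rv2E; rewrite !mxE /=; rewrite /v; ring.
Qed.

Definition tr (K : fieldType) (pi rho : K) := (pi == 0, rho == 0, pi == rho).

Lemma iso_tr (K : fieldType) (pi rho pi' rho' : K) :
  alg_iso pi rho pi' rho' -> tr pi rho = tr pi' rho'.
Proof. by case/iso_inv => a b c; rewrite /tr a b c. Qed.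

Lemma two_neq0 (K : fieldType) : [pchar K] =i pred0 -> (2%:R : K) != 0.
Proof. by move=> ch; rewrite ((pcharf0P _).1 ch 2). Qed.

Lemma canon_inj (K : fieldType) : [pchar K] =i pred0 -> forall i j : 'I_5,
  tr (canon_pi K i) (canon_rho K i) = tr (canon_pi K j) (canon_rho K j) -> i = j.
Proof.
move=> ch.
have h10 : ((1 : K) == 0) = false by rewrite oner_eq0.
have h01 : ((0 : K) == 1) = false by rewrite eq_sym oner_eq0.
have hm0 : ((-1 : K) == 0) = false by rewrite oppr_eq0 oner_eq0.
have h1m : ((1 : K) == -1) = false.
  apply/negbTE/eqP => h; move: (two_neq0 ch); rewrite mulr2n {1}h addNr eqxx //.
case=> [[|[|[|[|[|//]]]]] Hi] [[|[|[|[|[|//]]]]] Hj];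
  rewrite /tr /canon_pi /canon_rho /= ?h10 ?h01 ?hm0 ?h1m ?eqxx => E;
  apply: val_inj => //=; by case: E.
Qed.

Theorem proposition5p1 (K : fieldType) (charK0 : [pchar K] =i pred0) :
  (forall pi rho : K, exists i : 'I_5,
      alg_iso pi rho (canon_pi K i) (canon_rho K i) /\
      forall j : 'I_5, alg_iso pi rho (canon_pi K j) (canon_rho K j) -> j = i) /\
  (forall i j : 'I_5, i != j ->
      ~ alg_iso (canon_pi K i) (canon_rho K i) (canon_pi K j) (canon_rho K j)) /\
  (forall rho : K, rho != 0 -> alg_iso 0 rho 0 1) /\
  (forall pi : K, pi != 0 -> alg_iso pi 0 1 0) /\
  (forall pi : K, pi != 0 -> alg_iso pi pi 1 1) /\
  (forall pi rho : K, pi != 0 -> rho != 0 -> pi != rho -> alg_iso pi rho 1 (-1)).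
Proof.
have I3 : forall rho : K, rho != 0 -> alg_iso 0 rho 0 1.
  move=> rho r0; apply: (@mk_iso _ _ _ _ _ rho 0) => //; rewrite ?mulr0 ?addr0 ?mul0r ?mul1r //.
have I4 : forall pi : K, pi != 0 -> alg_iso pi 0 1 0.
  move=> pi p0; apply: (@mk_iso _ _ _ _ _ pi 0) => //; rewrite ?mulr0 ?addr0 ?mul0r ?mulr1 //.
have I5 : forall pi : K, pi != 0 -> alg_iso pi pi 1 1.
  move=> pi p0; apply: (@mk_iso _ _ _ _ _ pi 0) => //; rewrite ?mulr0 ?addr0 ?mul1r ?mulr1 //.
have I6 : forall pi rho : K, pi != 0 -> rho != 0 -> pi != rho -> alg_iso pi rho 1 (-1).
  move=> pi rho p0 r0 pr.
  have t0 := two_neq0 charK0.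
  apply: (@mk_iso _ _ _ _ _ ((pi - rho) / 2%:R) (- (pi + rho) / 2%:R)).
  - by rewrite mulf_neq0 ?invr_eq0 // subr_eq0.
  - rewrite (_ : _ + _ = pi) //; field; done.
  - rewrite (_ : _ + _ = - rho) ?oppr_eq0 //; field; done.
  - field; done.
  - field; done.
have I1 : alg_iso (0 : K) 0 0 0.
  apply: (@mk_iso _ _ _ _ _ 1 0); rewrite ?mulr0 ?addr0 ?oner_eq0 ?mul1r ?mulr1 //.
split.
  move=> pi rho.
  suff [i Hi] : exists i : 'I_5, alg_iso pi rho (canon_pi K i) (canon_rho K i).
    exists i; split => // j Hj; apply: (canon_inj charK0).
    by rewrite -(iso_tr Hi) -(iso_tr Hj).
  have [p0|p0] := eqVneq pi 0; have [r0|r0] := eqVneq rho 0.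
  - by exists (Ordinal (isT : (0 < 5)%N)); rewrite p0 r0.
  - by exists (Ordinal (isT : (2 < 5)%N)); rewrite p0 /=; apply: I3.
  - by exists (Ordinal (isT : (3 < 5)%N)); rewrite r0 /=; apply: I4.
  - have [e|e] := eqVneq pi rho.
      by exists (Ordinal (isT : (1 < 5)%N)); rewrite -e /=; apply: I5.
    by exists (Ordinal (isT : (4 < 5)%N)); apply: I6.
split.
  by move=> i j /eqP ij /iso_tr /(canon_inj charK0).
by [].
Qed.
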